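(* Let $H\in M_d(\mathbb{C})$ be Hermitian with non-degenerate spectrum and orthonormal eigenbasis $\{|j\rangle\}_{j=1}^d$, and let $\mathbb{G}_0[X]=\sum_{j=1}^d\langle j|X|j\rangle\,|j\rangle\langle j|$. Let $\mathbb{D}[\rho]=\sum_\alpha\big(h_\alpha\rho h_\alpha^\dagger-\tfrac12\{h_\alpha^\dagger h_\alpha,\rho\}\big)$ with $h_\alpha\in M_d(\mathbb{C})$, and set $\widehat{\mathbb{D}}=\mathbb{G}_0\circ\mathbb{D}\circ\mathbb{G}_0$. Then $\widehat{\mathbb{D}}$ generates a semigroup $e^{t\widehat{\mathbb{D}}}$, $t\ge0$, of positive, trace-preserving maps on the set of density matrices commuting with $H$ (i.e. density matrices of the form $\sum_j\rho_{jj}|j\rangle\langle j|$): for every such density matrix $\rho$ and every $t\ge0$, $e^{t\widehat{\mathbb{D}}}[\rho]$ is again a density matrix commuting with $H$.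
   Context: $\mathbb{G}_0$ is the time average of the unitary evolution $\rho\mapsto e^{-itH}\rho e^{itH}$, i.e. the projection onto the diagonal part in the eigenbasis of $H$; the density matrices commuting with $H$ are exactly the states invariant under that unitary evolution. *)

(* Defs.v *)
From mathcomp Require Import all_boot all_order all_algebra.
From mathcomp Require Export complex reals.
Set Implicit Arguments. Unset Strict Implicit. Unset Printing Implicit Defensive.
Import Order.TTheory GRing.Theory Num.Theory.
Local Open Scope ring_scope.
Local Open Scope complex_scope.

Section QDefs.
Variable R : realType.
Local Notation C := R[i].

Definition adjmx (m n : nat) (A : 'M[C]_(m, n)) : 'M[C]_(n, m) :=
  map_mx Num.conj A^T.

Definition is_hermitian (d : nat) (A : 'M[C]_d) : Prop := adjmx A = A.

Definition is_unitary_mx (d : nat) (U : 'M[C]_d) : Prop := adjmx U *m U = 1%:M.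

(* |j><j| where |j> is the j-th column of U *)
Definition projU (d : nat) (U : 'M[C]_d) (j : 'I_d) : 'M[C]_d :=
  col j U *m adjmx (col j U).

Definition G0 (d : nat) (U : 'M[C]_d) (X : 'M[C]_d) : 'M[C]_d :=
  \sum_(j < d) (adjmx (col j U) *m X *m col j U) 0 0 *: projU U j.

Definition dissipator (d m : nat) (h : 'I_m -> 'M[C]_d) (rho : 'M[C]_d)
  : 'M[C]_d :=
  \sum_(a < m) (h a *m rho *m adjmx (h a)
     - 2^-1 *: (adjmx (h a) *m h a *m rho + rho *m (adjmx (h a) *m h a))).

Definition Dhat (d m : nat) (U : 'M[C]_d) (h : 'I_m -> 'M[C]_d) :
  'M[C]_d -> 'M[C]_d :=
  fun X => G0 U (dissipator h (G0 U X)).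

(* positive semidefinite: <v|A|v> >= 0 for all v (0 <= z in C means z real, nonneg) *)
Definition is_psd_mx (d : nat) (A : 'M[C]_d) : Prop :=
  forall v : 'cV[C]_d, 0 <= (adjmx v *m A *m v) 0 0.

Definition density (d : nat) (rho : 'M[C]_d) : Prop :=
  is_hermitian rho /\ is_psd_mx rho /\ \tr rho = 1.

Definition exp_partial (d : nat) (L : 'M[C]_d -> 'M[C]_d) (t : R)
  (rho : 'M[C]_d) (n : nat) : 'M[C]_d :=
  \sum_(k < n) ((t ^+ k / (k`!)%:R)%:C *: iter k L rho).

Definition mx_cvg_to (d : nat) (S : nat -> 'M[C]_d) (M : 'M[C]_d) : Prop :=
  forall e : R, 0 < e -> exists N : nat, forall n : nat, (N <= n)%N ->
    forall i j, `|S n i j - M i j| < e%:C.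

Definition is_exp_apply (d : nat) (L : 'M[C]_d -> 'M[C]_d) (t : R)
  (rho M : 'M[C]_d) : Prop :=
  mx_cvg_to (exp_partial L t rho) M.

End QDefs.

(* Main.v *)
From mathcomp Require Import all_boot all_order all_algebra.
From mathcomp Require Import complex reals.
From mathcomp Require Import boolp classical_sets functions topology normedtype sequences exp.
Set Implicit Arguments. Unset Strict Implicit. Unset Printing Implicit Defensive.
Import Order.TTheory GRing.Theory Num.Theory.
Local Open Scope ring_scope.
Local Open Scope classical_set_scope.
Import numFieldNormedType.Exports.
Require Import Defs.
From mathcomp Require Import ring.
Section RealPart.
Variable R : realType.

Lemma tri_sum (F : nat -> nat -> R) n :
  \sum_(0 <= k < n) \sum_(0 <= i < k.+1) F i (k - i)%N =
  \sum_(0 <= i < n) \sum_(0 <= l < n - i) F i l.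
Proof.
elim: n => [|n IH]; first by rewrite !big_geq.
rewrite big_nat_recr //= IH [in RHS]big_nat_recr //= subSnn big_nat1.
rewrite [X in _ + X = _]big_nat_recr //= subnn addrA; congr (_ + _).
rewrite -big_split /=; apply: eq_big_nat => i /andP[_ Hi].
by rewrite subSn ?(ltnW Hi) // big_nat_recr.
Qed.
End RealPart.
Section RealPart2.
Variable R : realType.

Lemma sum_nat_ext (f : nat -> R) a b : (a <= b)%N -> (forall i, 0 <= f i) ->
  \sum_(0 <= i < a) f i <= \sum_(0 <= i < b) f i.
Proof.
move=> hab hf; rewrite (big_cat_nat (leq0n a) hab) /= lerDl.
by apply: sumr_ge0 => i _.
Qed.

Lemma rem_bound (F : nat -> nat -> R) (g : nat -> R) n m :
  (forall i, 0 <= g i) -> (forall i l, `|F i l| <= g i * g l) -> (m + m <= n)%N ->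
  `| \sum_(0 <= i < n) \sum_(0 <= l < n) F i l
     - \sum_(0 <= k < n) \sum_(0 <= i < k.+1) F i (k - i)%N |
  <= (\sum_(0 <= i < n) g i) ^+ 2 - (\sum_(0 <= i < m) g i) ^+ 2.
Proof.
move=> g0 Fb hmn; rewrite tri_sum -sumrB.
have split_in : forall (G : nat -> nat -> R) i,
   \sum_(0 <= l < n) G i l = \sum_(0 <= l < n - i) G i l + \sum_(n - i <= l < n) G i l.
  by move=> G i; rewrite -big_cat_nat // leq_subr.
have -> : \sum_(0 <= i < n) (\sum_(0 <= l < n) F i l - \sum_(0 <= l < n - i) F i l)
   = \sum_(0 <= i < n) \sum_(n - i <= l < n) F i l.
  by apply: eq_bigr => i _; rewrite split_in addrAC subrr add0r.
have -> : (\sum_(0 <= i < n) g i) ^+ 2 =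
   \sum_(0 <= i < n) \sum_(0 <= l < n - i) g i * g l +
   \sum_(0 <= i < n) \sum_(n - i <= l < n) g i * g l.
  rewrite expr2 big_distrl /= -big_split /=; apply: eq_bigr => i _.
  by rewrite big_distrr /= (split_in (fun i l => g i * g l)).
have -> : (\sum_(0 <= i < m) g i) ^+ 2 =
   \sum_(0 <= i < m) \sum_(0 <= l < m) g i * g l.
  by rewrite expr2 big_distrl /=; apply: eq_bigr => i _; rewrite big_distrr.
have h1 : `|\sum_(0 <= i < n) \sum_(n - i <= l < n) F i l| <=
          \sum_(0 <= i < n) \sum_(n - i <= l < n) g i * g l.
  apply: (le_trans (ler_norm_sum _ _ _)); apply: ler_sum => i _.
  apply: (le_trans (ler_norm_sum _ _ _)); apply: ler_sum => l _; exact: Fb.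
have h2 : \sum_(0 <= i < m) \sum_(0 <= l < m) g i * g l <=
          \sum_(0 <= i < n) \sum_(0 <= l < n - i) g i * g l.
  have hmn' : (m <= n)%N by apply: leq_trans hmn; exact: leq_addl.
  apply: (le_trans _ (@sum_nat_ext (fun i => \sum_(0 <= l < n - i) g i * g l) _ _ hmn' _)); last first.
    by move=> i; apply: sumr_ge0 => l _; apply: mulr_ge0.
  rewrite big_nat [X in _ <= X]big_nat; apply: ler_sum => i /andP[_ him].
  apply: sum_nat_ext; last by move=> l; apply: mulr_ge0.
  rewrite leq_subRL; last by apply: leq_trans (ltnW him) hmn'.
  by apply: leq_trans hmn; rewrite leq_add2r ltnW.
apply: (le_trans h1); rewrite [X in _ <= X - _]addrC -addrA lerDl subr_ge0 //.
Qed.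
End RealPart2.
From mathcomp Require Import ring.
Section RealMain.
Variable R : realType.
Variable d : nat.
Variable W : 'M[R]_d.
Hypothesis W0 : forall i j, 0 <= W i j.

Definition colsum (k : 'I_d) := \sum_i W i k.
Definition Qm : 'M[R]_d := \matrix_(k, j) (W k j - (k == j)%:R * colsum k).
Definition lam := \sum_k colsum k.
Definition Am : 'M[R]_d := \matrix_(k, j) (W k j + (k == j)%:R * (lam - colsum k)).

Lemma colsum_ge0 k : 0 <= colsum k.
Proof. by apply: sumr_ge0 => i _. Qed.

Lemma colsum_le k : colsum k <= lam.
Proof.
rewrite /lam (bigD1 k) //= lerDl; apply: sumr_ge0 => i _; exact: colsum_ge0.
Qed.

Lemma lam_ge0 : 0 <= lam.
Proof. by apply: sumr_ge0 => i _; exact: colsum_ge0. Qed.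

Lemma Am_ge0 k j : 0 <= Am k j.
Proof.
rewrite mxE addr_ge0 // mulr_ge0 // ?ler0n // subr_ge0; exact: colsum_le.
Qed.

Lemma sum_delta (F : 'I_d -> R) j : \sum_k (k == j)%:R * F k = F j.
Proof.
rewrite (bigD1 j) //= eqxx mul1r big1 ?addr0 // => k /negbTE ->; by rewrite mul0r.
Qed.

Lemma colsum_Am j : \sum_k Am k j = lam.
Proof.
under eq_bigr do rewrite mxE.
by rewrite big_split /= sum_delta -/(colsum j) addrC subrK.
Qed.

Lemma colsum_Qm j : \sum_k Qm k j = 0.
Proof.
under eq_bigr do rewrite mxE.
by rewrite sumrB sum_delta subrr.
Qed.

Lemma sum_mulmx (A : 'M[R]_d) (x : 'cV[R]_d) :
  \sum_k (A *m x) k 0 = \sum_j (\sum_k A k j) * x j 0.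
Proof.
under eq_bigr do rewrite mxE.
rewrite exchange_big /=; apply: eq_bigr => j _; by rewrite big_distrl.
Qed.

Lemma Qm_sum0 (x : 'cV[R]_d) : \sum_k (Qm *m x) k 0 = 0.
Proof.
rewrite sum_mulmx big1 // => j _; by rewrite colsum_Qm mul0r.
Qed.

Lemma Am_pow (pr : 'cV[R]_d) l : (forall j, 0 <= pr j 0) -> \sum_j pr j 0 = 1 ->
  (forall j, 0 <= (Am ^+ l *m pr) j 0) /\ \sum_j (Am ^+ l *m pr) j 0 = lam ^+ l.
Proof.
move=> p0 p1; elim: l => [|l [IH1 IH2]].
  by rewrite expr0 mul1mx; split.
rewrite exprS -mulmxA; split.
  move=> j; rewrite mxE; apply: sumr_ge0 => k _; apply: mulr_ge0 => //.
  exact: Am_ge0.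
rewrite sum_mulmx.
under eq_bigr do rewrite colsum_Am.
by rewrite -big_distrr /= IH2 exprS.
Qed.

Lemma Am_pow_le (pr : 'cV[R]_d) l j : (forall j, 0 <= pr j 0) -> \sum_j pr j 0 = 1 ->
  (Am ^+ l *m pr) j 0 <= lam ^+ l.
Proof.
move=> p0 p1; have [h1 h2] := Am_pow l p0 p1.
by rewrite -h2 (bigD1 j) //= lerDl; apply: sumr_ge0 => i _.
Qed.

Lemma scalar_exp (a : R) i : ((a%:M : 'M[R]_d) ^+ i) = (a ^+ i)%:M.
Proof.
elim: i => [|i IH]; first by rewrite !expr0.
by rewrite !exprS IH scalar_mxM.
Qed.

Lemma Qm_eq : Qm = Am + (- lam)%:M.
Proof.
apply/matrixP => k j; rewrite !mxE; case: (k == j) => /=; rewrite ?mulr1n ?mulr0n ?mul1r ?mul0r ?addr0 ?subr0 //.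
by rewrite addrA addrAC addrK.
Qed.
End RealMain.
Section RealMain2.
Variable R : realType.
Variable d : nat.
Variable W : 'M[R]_d.
Hypothesis W0 : forall i j, 0 <= W i j.
Local Notation Qm := (Qm W).
Local Notation Am := (Am W).
Local Notation lam := (lam W).

Lemma term_eq (t : R) (pr : 'cV[R]_d) k j :
  t ^+ k / k`!%:R * (Qm ^+ k *m pr) j 0 =
  \sum_(0 <= i < k.+1) ((- lam * t) ^+ i / i`!%:R) *
      (t ^+ (k - i) / (k - i)`!%:R * (Am ^+ (k - i) *m pr) j 0).
Proof.
rewrite Qm_eq exprDn_comm; last first.
  by rewrite /GRing.comm; apply: scalar_mxC.
rewrite mulmx_suml summxE big_distrr /= big_mkord; apply: eq_bigr => i _.
rewrite scalar_exp -[Am ^+ (k - i) * _]/(Am ^+ (k - i) *m _) mul_mx_scalar.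
rewrite -[_ *+ 'C(k, i)]scaler_nat scalerA -scalemxAl mxE.
have hi : (i <= k)%N by rewrite -ltnS.
rewrite -(bin_fact hi) -[in t ^+ k](subnKC hi) exprD !natrM exprMn.
have h1 : ('C(k, i))%:R != 0 :> R by rewrite pnatr_eq0 -lt0n bin_gt0.
have h2 : (i`!)%:R != 0 :> R by rewrite pnatr_eq0 -lt0n fact_gt0.
have h3 : ((k - i)`!)%:R != 0 :> R by rewrite pnatr_eq0 -lt0n fact_gt0.
by field; rewrite h1 h2 h3.
Qed.
End RealMain2.
Section RealMain3.
Variable R : realType.
Variable d : nat.
Variable W : 'M[R]_d.
Hypothesis W0 : forall i j, 0 <= W i j.
Local Notation Qm := (Qm W).
Local Notation Am := (Am W).
Local Notation lam := (lam W).

Lemma real_main (t : R) (pr : 'cV[R]_d) : 0 <= t -> (forall j, 0 <= pr j 0) ->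
  \sum_j pr j 0 = 1 ->
  exists c : 'cV[R]_d,
   (forall j, (fun n => \sum_(k < n) t ^+ k / k`!%:R * (Qm ^+ k *m pr) j 0) @ \oo
                 --> c j 0)
   /\ (forall j, 0 <= c j 0) /\ \sum_j c j 0 = 1.
Proof.
move=> t0 p0 p1.
have x0 : 0 <= lam * t by rewrite mulr_ge0 // lam_ge0.
pose g := exp_coeff (lam * t).
have g0 : forall i, 0 <= g i by move=> i; exact: exp_coeff_ge0.
pose G := series g.
have cvgG : cvgn G by exact: is_cvg_series_exp_coeff.
have ndG : nondecreasing_seq G by apply: nondecreasing_series => n _ _; exact: g0.
have GleGl : forall n, G n <= limn G by move=> n; exact: nondecreasing_cvgn_le.
have G0 : forall n, 0 <= G n by move=> n; apply: sumr_ge0 => i _.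
pose a (j : 'I_d) l := t ^+ l / l`!%:R * (Am ^+ l *m pr) j 0.
have a0 : forall j l, 0 <= a j l.
  move=> j l; apply: mulr_ge0; first by rewrite divr_ge0 ?exprn_ge0.
  by case: (Am_pow W0 l p0 p1) => h _; exact: h.
have ag : forall j l, a j l <= g l.
  move=> j l; rewrite /a /g /exp_coeff /=.
  have -> : (lam * t) ^+ l / l`!%:R = t ^+ l / l`!%:R * lam ^+ l by rewrite exprMn; ring.
  rewrite ler_wpM2l //; first by rewrite divr_ge0 ?exprn_ge0.
  exact: Am_pow_le.
pose b i := exp_coeff (- lam * t) i.
have bg : forall i, `|b i| = g i.
  move=> i; rewrite /b /g /exp_coeff /= normrM normfV normrX normr_nat mulNr normrN.
  by rewrite ger0_norm.
pose SB := series (exp_coeff (- lam * t)).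
have cvgSB : SB @ \oo --> expR (- lam * t) by exact: is_cvg_series_exp_coeff.
pose alpha j := limn (series (a j)).
have cvgSA : forall j, series (a j) @ \oo --> alpha j.
  move=> j; apply: nondecreasing_is_cvgn.
    by apply: nondecreasing_series => n _ _; exact: a0.
  exists (limn G) => _ [n _ <-]; apply: le_trans (GleGl n).
  by rewrite /series /=; apply: ler_sum => i _; exact: ag.
have alpha0 : forall j, 0 <= alpha j.
  move=> j; apply: le_trans (nondecreasing_cvgn_le _ _ 0%N).
  - by rewrite /series /= big_geq.
  - by apply: nondecreasing_series => n _ _; exact: a0.
  - exact: cvgSA.
pose c : 'cV[R]_d := \col_j (alpha j * expR (- lam * t)).
pose s j n := \sum_(k < n) t ^+ k / k`!%:R * (Qm ^+ k *m pr) j 0.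
have sE : forall j n, s j n =
    \sum_(0 <= k < n) \sum_(0 <= i < k.+1) (b i * a j (k - i)%N).
  move=> j n; rewrite /s big_mkord; apply: eq_bigr => k _; exact: term_eq.
have prodE : forall j n, SB n * series (a j) n =
    \sum_(0 <= i < n) \sum_(0 <= l < n) (b i * a j l).
  move=> j n; rewrite /SB /series /= big_distrl /=; apply: eq_bigr => i _.
  by rewrite big_distrr.
have Fb : forall j i l, `|b i * a j l| <= g i * g l.
  move=> j i l; rewrite normrM bg ger0_norm ?a0 //; apply: ler_wpM2l => //.
have conv : forall j, s j @ \oo --> c j 0.
  move=> j; pose D n := SB n * series (a j) n - s j n.
  have HD : D @ \oo --> 0.
    apply/cvgrPdist_lt => e e0.
    have HG2 : (fun n => G n * G n) @ \oo --> limn G * limn G by exact: cvgM.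
    move/cvgrPdist_lt: HG2 => /(_ e e0) [M _ HMM].
    exists (M + M)%N => // n /= hn.
    rewrite sub0r normrN /D prodE sE.
    apply: le_lt_trans (@rem_bound R (fun i l => b i * a j l) g n M g0 (Fb j) hn) _.
    apply: le_lt_trans (HMM M (leqnn M)).
    rewrite -!expr2 (le_trans _ (ler_norm _)) // lerB // !expr2 ler_pM ?(G0 n) ?(GleGl n) //.
  have HM : (fun n => SB n * series (a j) n) @ \oo --> expR (- lam * t) * alpha j.
    exact: cvgM.
  have E : s j = (fun n => SB n * series (a j) n) - D.
    by apply/funext => n /=; rewrite /D subKr.
  rewrite E mxE mulrC -[X in _ --> X]subr0; exact: cvgB.
exists c; split; first exact: conv.
split; first by move=> j; rewrite mxE mulr_ge0 // ltW // expR_gt0.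
have Hsum : (fun n => \sum_j s j n) @ \oo --> \sum_j c j 0.
  apply: (@cvg_big R _ +%R 0 xpredT (@add_continuous R)) => //.
have Hone : (fun n => \sum_j s j n) @ \oo --> (1 : R).
  apply: cvg_near_cst; exists 1%N => // -[|n] //= _.
  rewrite /s exchange_big /= big_ord_recl /= -big_distrr /= expr0 mul1mx p1.
  rewrite big1 ?addr0 ?fact0 ?divr1 ?mulr1 // => k _.
  by rewrite -big_distrr /= /bump /= add1n [Qm ^+ k.+1]exprS -mulmxA Qm_sum0 mulr0.
exact: (cvg_unique _ Hsum Hone).
Qed.
End RealMain3.
Local Open Scope complex_scope.
Section Cx.
Variable R : realType.
Local Notation C := R[i].
Variable d : nat.

Lemma adjmxM m n p (A : 'M[C]_(m, n)) (B : 'M[C]_(n, p)) :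
  adjmx (A *m B) = adjmx B *m adjmx A.
Proof. by rewrite /adjmx trmx_mul map_mxM. Qed.

Lemma adjmxK m n (A : 'M[C]_(m, n)) : adjmx (adjmx A) = A.
Proof. by apply/matrixP => i j; rewrite !mxE conjCK. Qed.

Lemma adjmxE m n (A : 'M[C]_(m, n)) i j : adjmx A i j = Num.conj (A j i).
Proof. by rewrite !mxE. Qed.

Lemma adjmx1 : adjmx (1%:M : 'M[C]_d) = 1%:M.
Proof.
apply/matrixP => i j; rewrite !mxE eq_sym; case: (i == j) => /=.
  by rewrite conjC1.
by rewrite conjC0.
Qed.

Lemma quad_col (U X : 'M[C]_d) j :
  (adjmx (col j U) *m X *m col j U) 0 0 = (adjmx U *m X *m U) j j.
Proof.
rewrite !mxE; apply: eq_bigr => k _; rewrite !mxE; congr (_ * _).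
by apply: eq_bigr => l _; rewrite !mxE.
Qed.

Variable U : 'M[C]_d.
Hypothesis Uu : adjmx U *m U = 1%:M.
Lemma UU : U *m adjmx U = 1%:M. Proof. exact: mulmx1C. Qed.

Definition Dm (c : 'rV[C]_d) : 'M[C]_d := U *m diag_mx c *m adjmx U.

Lemma DmE c a b : Dm c a b = \sum_l U a l * c 0 l * Num.conj (U b l).
Proof.
rewrite /Dm mul_mx_diag !mxE; apply: eq_bigr => l _; by rewrite !mxE.
Qed.

Lemma G0E X : G0 U X = Dm (\row_j (adjmx U *m X *m U) j j).
Proof.
apply/matrixP => a b; rewrite DmE /G0 summxE; apply: eq_bigr => j _.
rewrite mxE quad_col /projU [(col j U *m _) a b]mxE big_ord1 !mxE; ring.
Qed.

Lemma UDmU c : adjmx U *m Dm c *m U = diag_mx c.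
Proof. by rewrite /Dm !mulmxA Uu mul1mx -mulmxA Uu mulmx1. Qed.

Lemma G0Dm c : G0 U (Dm c) = Dm c.
Proof.
rewrite G0E UDmU; congr Dm; apply/rowP => j; by rewrite !mxE eqxx mulr1n.
Qed.

End Cx.
Section Cx2.
Variable R : realType.
Local Notation C := R[i].
Variable d : nat.
Variable U : 'M[C]_d.
Hypothesis Uu : adjmx U *m U = 1%:M.
Local Notation Dm := (Dm U).

Lemma core (A B : 'M[C]_d) c : adjmx U *m (A *m Dm c *m B) *m U =
  (adjmx U *m A *m U) *m diag_mx c *m (adjmx U *m B *m U).
Proof. by rewrite /Dm !mulmxA. Qed.

Lemma coreL (A : 'M[C]_d) c : adjmx U *m (A *m Dm c) *m U =
  (adjmx U *m A *m U) *m diag_mx c.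
Proof. by rewrite -[A *m Dm c]mulmx1 core mulmx1 Uu mulmx1. Qed.

Lemma coreR (A : 'M[C]_d) c : adjmx U *m (Dm c *m A) *m U =
  diag_mx c *m (adjmx U *m A *m U).
Proof. by rewrite -[Dm c]mul1mx core mulmx1 Uu mul1mx. Qed.

Lemma coreM (A B : 'M[C]_d) : adjmx U *m (A *m B) *m U =
  (adjmx U *m A *m U) *m (adjmx U *m B *m U).
Proof.
by rewrite !mulmxA -[adjmx U *m A *m U *m adjmx U]mulmxA (UU Uu) mulmx1.
Qed.

Lemma adj_conj (A : 'M[C]_d) : adjmx (adjmx U *m A *m U) = adjmx U *m adjmx A *m U.
Proof. by rewrite !adjmxM adjmxK mulmxA. Qed.

Definition gU m (h : 'I_m -> 'M[C]_d) a := adjmx U *m h a *m U.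
Definition wC m (h : 'I_m -> 'M[C]_d) k j := \sum_a gU h a k j * Num.conj (gU h a k j).

Lemma DhatDm m (h : 'I_m -> 'M[C]_d) c : Dhat U h (Dm c) =
  Dm (\row_k (\sum_j wC h k j * c 0 j - (\sum_i wC h i k) * c 0 k)).
Proof.
rewrite /Dhat G0Dm // G0E; congr Dm; apply/rowP => k.
have E : adjmx U *m dissipator h (Dm c) *m U = \sum_a
   (gU h a *m diag_mx c *m adjmx (gU h a) - 2^-1 *:
     (adjmx (gU h a) *m gU h a *m diag_mx c + diag_mx c *m (adjmx (gU h a) *m gU h a))).
  rewrite /dissipator mulmx_sumr mulmx_suml; apply: eq_bigr => a _.
  rewrite mulmxBr mulmxBl -scalemxAr -scalemxAl mulmxDr mulmxDl.
  by rewrite core coreL coreR !coreM /gU adj_conj.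
rewrite E !mxE summxE.
have Ea : forall a, (gU h a *m diag_mx c *m adjmx (gU h a) -
      2^-1 *: (adjmx (gU h a) *m gU h a *m diag_mx c +
       diag_mx c *m (adjmx (gU h a) *m gU h a))) k k =
   \sum_j gU h a k j * Num.conj (gU h a k j) * c 0 j -
   (\sum_i gU h a i k * Num.conj (gU h a i k)) * c 0 k.
  move=> a; move: (gU h a) => G.
  rewrite !mul_mx_diag mul_diag_mx !mxE.
  under eq_bigr do rewrite !mxE.
  under [X in _ - 2^-1 * (_ + _ * X)]eq_bigr do rewrite !mxE.
  have -> : \sum_j adjmx G k j * G j k = \sum_i G i k * Num.conj (G i k).
    by apply: eq_bigr => i _; rewrite !mxE mulrC.
  have -> : \sum_i Num.conj (G i k) * G i k = \sum_i G i k * Num.conj (G i k).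
    by apply: eq_bigr => i _; rewrite mulrC.
  have -> : \sum_i G k i * c 0 i * Num.conj (G k i) = \sum_j G k j * Num.conj (G k j) * c 0 j.
    by apply: eq_bigr => i _; rewrite mulrAC.
  have h2 : (2 : C) != 0 by rewrite pnatr_eq0.
  by field.
rewrite (eq_bigr _ (fun a _ => Ea a)) sumrB; congr (_ - _).
  rewrite exchange_big /=; apply: eq_bigr => j _; by rewrite /wC big_distrl.
by rewrite /wC exchange_big /= big_distrl.
Qed.
End Cx2.
Section Cx3.
Variable R : realType.
Local Notation C := R[i].
Variable d : nat.
Variable U : 'M[C]_d.
Hypothesis Uu : adjmx U *m U = 1%:M.
Variable m : nat.
Variable h : 'I_m -> 'M[C]_d.
Local Notation Dm := (Dm U).

Definition WR : 'M[R]_d :=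
  \matrix_(k, j) \sum_a (Re (gU U h a k j) ^+ 2 + Im (gU U h a k j) ^+ 2).

Lemma WR_ge0 k j : 0 <= WR k j.
Proof. rewrite mxE; apply: sumr_ge0 => a _; apply: addr_ge0; exact: sqr_ge0. Qed.

Lemma wC_real k j : wC U h k j = (WR k j)%:C.
Proof.
rewrite /wC mxE rmorph_sum; apply: eq_bigr => a _.
by rewrite -normCK -add_Re2_Im2.
Qed.

Definition rc (v : 'cV[R]_d) : 'rV[C]_d := \row_j (v j 0)%:C.

Lemma DhatDm_real v : Dhat U h (Dm (rc v)) = Dm (rc (Qm WR *m v)).
Proof.
rewrite DhatDm //; congr Dm; apply/rowP => k; rewrite [LHS]mxE [RHS]mxE.
have -> : (Qm WR *m v) k 0 = \sum_j WR k j * v j 0 - colsum WR k * v k 0.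
  rewrite mxE; under eq_bigr do rewrite mxE mulrBl.
  rewrite sumrB; congr (_ - _).
  rewrite (bigD1 k) //= eqxx mul1r big1 ?addr0 // => j.
  by rewrite eq_sym => /negbTE ->; rewrite !mul0r.
rewrite rmorphB /= rmorphM /= rmorph_sum /= mxE; congr (_ - _ * _).
  by apply: eq_bigr => j _; rewrite wC_real rmorphM !mxE.
rewrite /colsum rmorph_sum; apply: eq_bigr => i _; by rewrite wC_real.
Qed.

Lemma iter_Dhat v n : iter n (Dhat U h) (Dm (rc v)) = Dm (rc (Qm WR ^+ n *m v)).
Proof.
elim: n => [|n IH]; first by rewrite expr0 mul1mx.
by rewrite iterS IH DhatDm_real exprS mulmxA.
Qed.

Lemma exp_partialE (t : R) v n :
  exp_partial (Dhat U h) t (Dm (rc v)) n =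
  Dm (rc (\col_j \sum_(k < n) t ^+ k / k`!%:R * (Qm WR ^+ k *m v) j 0)).
Proof.
rewrite /exp_partial; under eq_bigr do rewrite iter_Dhat.
apply/matrixP => a b; rewrite summxE DmE.
under eq_bigr do rewrite mxE DmE big_distrr.
rewrite exchange_big /=; apply: eq_bigr => l _.
rewrite !mxE rmorph_sum big_distrr big_distrl /=; apply: eq_bigr => k _.
rewrite !mxE rmorphM /=; ring.
Qed.

End Cx3.
Section Cx4.
Variable R : realType.
Local Notation C := R[i].
Variable d : nat.
Variable U : 'M[C]_d.
Hypothesis Uu : adjmx U *m U = 1%:M.
Local Notation Dm := (Dm U).

Lemma conjR (x : R) : Num.conj (x%:C) = x%:C.
Proof. by apply: conj_Creal; rewrite complex_real. Qed.

Lemma normR (x : R) : `|x%:C| = `|x|%:C.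
Proof. by rewrite normc_def /= expr0n /= addr0 sqrtr_sqr. Qed.

Lemma normU_le1 i l : `|U i l| <= 1.
Proof.
have := congr1 (fun M : 'M[C]_d => M l l) Uu; rewrite /= !mxE eqxx mulr1n => h1.
rewrite -(@expr_le1 _ 2) // normCK -h1 (bigD1 i) //= adjmxE [_ * U i l]mulrC lerDl.
by apply: sumr_ge0 => k _; rewrite adjmxE mulrC mul_conjC_ge0.
Qed.

Lemma Dm_herm (v : 'cV[R]_d) : is_hermitian (Dm (rc v)).
Proof.
rewrite /is_hermitian /Dm !adjmxM adjmxK mulmxA; congr (_ *m _ *m _).
apply/matrixP => i j; rewrite !mxE.
case: (eqVneq i j) => [->|hij]; first by rewrite !mulr1n conjR.
by rewrite !mulr0n conjC0.
Qed.

Lemma Dm_psd (v : 'cV[R]_d) : (forall j, 0 <= v j 0) -> is_psd_mx (Dm (rc v)).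
Proof.
move=> v0 w; rewrite /Dm.
have -> : adjmx w *m (U *m diag_mx (rc v) *m adjmx U) *m w =
   adjmx (adjmx U *m w) *m diag_mx (rc v) *m (adjmx U *m w).
  by rewrite adjmxM adjmxK !mulmxA.
move: (adjmx U *m w) => z.
rewrite mul_mx_diag !mxE; apply: sumr_ge0 => l _; rewrite !mxE.
rewrite mulrAC mulrC mulr_ge0 //; first by rewrite ler0c.
by rewrite mulrC mul_conjC_ge0.
Qed.

Lemma Dm_tr (v : 'cV[R]_d) : \tr (Dm (rc v)) = (\sum_j v j 0)%:C.
Proof.
rewrite /Dm mxtrace_mulC mulmxA Uu mul1mx mxtrace_diag rmorph_sum.
by apply: eq_bigr => j _; rewrite mxE.
Qed.

Lemma cvg_transfer (S : nat -> 'cV[R]_d) (c : 'cV[R]_d) :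
  (forall j, (fun n => S n j 0) @ \oo --> c j 0) ->
  mx_cvg_to (fun n => Dm (rc (S n))) (Dm (rc c)).
Proof.
move=> hc e e0.
pose e' := e / d.+1%:R.
have e'0 : 0 < e' by rewrite divr_gt0 // ltr0n.
have : forall l, exists N, forall n, (N <= n)%N -> `|c l 0 - S n l 0| < e'.
  move=> l; move/cvgrPdist_lt: (hc l) => /(_ e' e'0) [N _ HN].
  by exists N => n hn; apply: HN.
case/choice => Nf HNf.
exists (\max_l Nf l) => n hn a b.
rewrite !DmE -sumrB.
apply: le_lt_trans (ler_norm_sum _ _ _) _.
apply: (@le_lt_trans _ _ (\sum_(l < d) e'%:C)).
  apply: ler_sum => l _.
  rewrite !mxE -mulrBl -mulrBr -rmorphB !normrM norm_conjC normR.
  rewrite -[e'%:C]mul1r -[1 * _]mulr1; apply: ler_pM.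
  - by rewrite mulr_ge0 // ler0c.
  - by [].
  - apply: ler_pM; [by [] | by rewrite ler0c | exact: normU_le1 |].
    rewrite lecR distrC ltW //; apply: HNf.
    by apply: leq_trans hn; exact: leq_bigmax.
  - exact: normU_le1.
rewrite sumr_const card_ord -rmorphMn ltcR /e' -mulr_natr mulrAC.
by rewrite ltr_pdivrMr ?ltr0n // ltr_pM2l // ltr_nat.
Qed.

Variable H : 'M[C]_d.
Variable lam : 'I_d -> C.
Hypothesis hH : forall j, H *m col j U = lam j *: col j U.

Lemma HU : H *m U = U *m diag_mx (\row_j lam j).
Proof.
apply/matrixP => a j; have := congr1 (fun M : 'cV[C]_d => M a 0) (hH j).
rewrite mul_mx_diag !mxE mulrC => <-; apply: eq_bigr => k _; by rewrite !mxE.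
Qed.

Lemma HE : H = U *m diag_mx (\row_j lam j) *m adjmx U.
Proof. by rewrite -HU -mulmxA (UU Uu) mulmx1. Qed.

Lemma Dm_comm c : H *m Dm c = Dm c *m H.
Proof.
rewrite HE /Dm !mulmxA -[_ *m adjmx U *m U]mulmxA Uu mulmx1.
rewrite -[U *m diag_mx c *m adjmx U *m U]mulmxA Uu mulmx1.
by rewrite -!mulmxA [diag_mx _ *m (diag_mx _ *m _)]mulmxA diag_mxC -!mulmxA.
Qed.

Hypothesis hinj : injective lam.

Lemma rho_diag rho : H *m rho = rho *m H ->
  adjmx U *m rho *m U = diag_mx (\row_j (adjmx U *m rho *m U) j j).
Proof.
move=> hc.
have L : adjmx U *m H *m U = diag_mx (\row_j lam j).
  by rewrite -mulmxA HU mulmxA Uu mul1mx.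
have Xc : (adjmx U *m rho *m U) *m diag_mx (\row_j lam j) =
          diag_mx (\row_j lam j) *m (adjmx U *m rho *m U).
  by rewrite -L -!coreM // hc.
apply/matrixP => k j; rewrite [RHS]mxE !mxE.
case: eqP => [-> //|hkj]; rewrite mulr0n /=.
have := congr1 (fun M : 'M[C]_d => M k j) Xc; rewrite mul_mx_diag mul_diag_mx !mxE.
move=> /eqP; rewrite mulrC -subr_eq0 -mulrBl mulf_eq0 subr_eq0 => /orP[/eqP h|/eqP //].
by case: hkj; apply: hinj.
Qed.

End Cx4.
Theorem lemma4 (R : realType) (d m : nat) (H U : 'M[R[i]]_d)
  (lam : 'I_d -> R[i]) (h : 'I_m -> 'M[R[i]]_d) :
  is_hermitian H ->
  is_unitary_mx U ->
  (forall j : 'I_d, H *m col j U = lam j *: col j U) ->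
  injective lam ->
  forall (rho : 'M[R[i]]_d), density rho -> H *m rho = rho *m H ->
  forall t : R, 0 <= t ->
  exists M : 'M[R[i]]_d,
    is_exp_apply (Dhat U h) t rho M /\ density M /\ H *m M = M *m H.
Proof.
move=> _ hU hHU hinj rho [rhoH [rhoP rhoT]] hc t t0.
have Xd := rho_diag hU hHU hinj hc.
move: Xd; set X := adjmx U *m rho *m U => Xd.
have rhoE0 : rho = U *m X *m adjmx U.
  by rewrite /X !mulmxA (UU hU) mul1mx -mulmxA (UU hU) mulmx1.
have Xpos : forall j, 0 <= X j j by move=> j; rewrite /X -quad_col; exact: rhoP.
clearbody X.
pose pr : 'cV[R]_d := \col_j Re (X j j).
have Xjj : forall j, X j j = (pr j 0)%:C.
  move=> j; have := Xpos j; rewrite mxE.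
  by case: (X j j) => a b; rewrite lecE /= => /andP[/eqP -> _].
have p0 : forall j, 0 <= pr j 0.
  by move=> j; have := Xpos j; rewrite lecE mxE => /andP[_].
have rhoE : rho = Dm U (rc pr).
  rewrite rhoE0 Xd /Dm; congr (_ *m diag_mx _ *m _); apply/rowP => j.
  by rewrite !mxE Xjj.
have p1 : \sum_j pr j 0 = 1.
  by apply: complexI; rewrite rmorph1 -(Dm_tr hU) -rhoE.
have [c [hcv [c0 c1]]] := real_main (@WR_ge0 R d U m h) t0 p0 p1.
exists (Dm U (rc c)); split.
  rewrite /is_exp_apply rhoE.
  have -> : exp_partial (Dhat U h) t (Dm U (rc pr)) =
    (fun n => Dm U (rc (\col_j \sum_(k < n) t ^+ k / k`!%:R * (Qm (WR U h) ^+ k *m pr) j 0))).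
    by apply/funext => n; rewrite exp_partialE.
  apply: cvg_transfer => // j.
  have -> : (fun n => (\col_j0 \sum_(k < n) t ^+ k / k`!%:R * (Qm (WR U h) ^+ k *m pr) j0 0) j 0)
     = (fun n => \sum_(k < n) t ^+ k / k`!%:R * (Qm (WR U h) ^+ k *m pr) j 0).
    by apply/funext => n; rewrite mxE.
  exact: hcv.
split; last exact: (Dm_comm hU hHU).
split; first exact: Dm_herm.
split; first exact: Dm_psd.
by rewrite Dm_tr // c1 rmorph1.
Qed.
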